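(* $\mathrm{Sort}(\mathrm{SC}_{1\underline{23}})$ is a permutation class.
   Context: $\mathfrak S_n$ is the set of permutations of $\{1,\dots,n\}$. A permutation $\pi$ contains a (classical) permutation $\tau$ if some subsequence of $\pi$ has the same relative order as $\tau$. A permutation class is a set $\Pi$ of permutations such that every permutation contained in some $\pi\in\Pi$ is also in $\Pi$. A vincular pattern is a permutation with some entries underlined; a sequence contains it if it has a subsequence with the same relative order in which entries corresponding to adjacent underlined entries occupy consecutive positions. An occurrence of $1\underline{23}$ is $a_i a_j a_{j+1}$ with $i<j$ and $a_i<a_j<a_{j+1}$. For a pattern $\sigma$, the map $\mathrm{SC}_\sigma$ acts on $\tau$: read entries left to right; when the next entry $x$ is read, if pushing $x$ yields a stack whose entries read top to bottom (stack adjacency = consecutive positions) avoid $\sigma$, push $x$; otherwise pop the top stack entry to the output and repeat. At the end pop all remaining entries; the output is $\mathrm{SC}_\sigma(\tau)$. West's stack-sorting map is $s=\mathrm{SC}_{21}$. $\mathrm{Sort}_n(\mathrm{SC}_\sigma)=\{\tau\in\mathfrak S_n : s(\mathrm{SC}_\sigma(\tau))=12\cdots n\}$ and $\mathrm{Sort}(\mathrm{SC}_\sigma)=\bigcup_{n\ge1}\mathrm{Sort}_n(\mathrm{SC}_\sigma)$. *)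

(* Defs.v *)
From mathcomp Require Import all_boot.
Set Implicit Arguments. Unset Strict Implicit. Unset Printing Implicit Defensive.

Definition is_perm (n : nat) (p : seq nat) : bool := perm_eq p (iota 1 n).

(* A (possibly vincular) pattern is a pair (tau, adj): tau is the sequence of
   the pattern, and adj lists the 0-based positions k such that entries k and
   k+1 of tau are both underlined (i.e. adjacent underlined entries), so their
   matching entries must occupy consecutive positions. *)

Definition occ_at (s tau : seq nat) (adj : seq nat) (idx : seq nat) : bool :=
  [&& size idx == size tau,
      all (fun i => all (fun j =>
         (nth 0 s (nth 0 idx i) < nth 0 s (nth 0 idx j)) == (nth 0 tau i < nth 0 tau j))
         (iota 0 (size tau))) (iota 0 (size tau))
    & all (fun k => nth 0 idx k.+1 == (nth 0 idx k).+1) adj].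

Fixpoint all_masks (n : nat) : seq bitseq :=
  if n is n'.+1 then [seq b :: m | b <- [:: true; false], m <- all_masks n'] else [:: [::]].

Definition vcontains (s tau adj : seq nat) : bool :=
  has (fun m => occ_at s tau adj (mask m (iota 0 (size s)))) (all_masks (size s)).

Definition contains (s tau : seq nat) : bool := vcontains s tau [::].

Section SC.
Variable avoid : seq nat -> bool. (* the stack (top first) is allowed iff avoid holds *)

Fixpoint push_pop (x : nat) (st : seq nat) : seq nat * seq nat :=
  if avoid (x :: st) then ([::], x :: st) else
  match st with
  | [::] => ([::], [:: x])
  | y :: st' => let: (p, s) := push_pop x st' in (y :: p, s)
  end.

Fixpoint SC_aux (input st : seq nat) : seq nat :=
  match input with
  | [::] => st
  | x :: r => let: (p, s) := push_pop x st in p ++ SC_aux r s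
  end.

Definition SC (tau : seq nat) : seq nat := SC_aux tau [::].
End SC.

Definition SCv (tau adj : seq nat) : seq nat -> seq nat :=
  SC (fun st => ~~ vcontains st tau adj).

Definition west_s : seq nat -> seq nat := SCv [:: 2; 1] [::].

(* SC_{1 \underline{23}} : entries 2 and 3 (0-based positions 1 and 2) underlined *)
Definition SC_1_23 : seq nat -> seq nat := SCv [:: 1; 2; 3] [:: 1].

Definition Sort_n (f : seq nat -> seq nat) (n : nat) (tau : seq nat) : bool :=
  is_perm n tau && (west_s (f tau) == iota 1 n).

Definition SortSet (f : seq nat -> seq nat) (tau : seq nat) : Prop :=
  exists2 n, 1 <= n & Sort_n f n tau.

Definition perm_class (Pi : seq nat -> Prop) : Prop :=
  (forall pi, Pi pi -> exists2 n, 1 <= n & is_perm n pi) /\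
  (forall pi tau, Pi pi -> (exists2 m, 1 <= m & is_perm m tau) ->
     contains pi tau -> Pi tau).

Example west_ex : west_s [:: 3; 1; 2] = [:: 1; 2; 3]. Proof. by vm_compute. Qed.
Example west_ex2 : west_s [:: 2; 3; 1] = [:: 2; 1; 3]. Proof. by vm_compute. Qed.
Example sc_ex : SC_1_23 [:: 1; 2; 3] = [:: 3; 2; 1]. Proof. by vm_compute. Qed.
Example sc_ex2 : SC_1_23 [:: 2; 1; 3] = [:: 3; 1; 2]. Proof. by vm_compute. Qed.
Example sc_ex3 : SC_1_23 [:: 2; 3; 1] = [:: 1; 3; 2]. Proof. by vm_compute. Qed.
Example cont_ex : contains [:: 3; 1; 4; 2] [:: 2; 1] && ~~ contains [:: 1; 2; 3] [:: 2; 1]. Proof. by vm_compute. Qed.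

(* Main.v *)
Require Import Defs.
From mathcomp Require Import all_boot zify.
Set Implicit Arguments. Unset Strict Implicit. Unset Printing Implicit Defensive.

Lemma all_masks_mem n m : size m = n -> m \in all_masks n.
Proof.
elim: n m => [|n IH] [|b m] //= [Hm].
have H := IH _ Hm.
have inj (c : bool) : injective (cons c) by move=> x y [].
by rewrite mem_cat; case: b; rewrite ?mem_cat (mem_map (inj _)) H ?orbT.
Qed.

Lemma vcontainsP s tau adj :
  reflect (exists idx, [/\ sorted ltn idx, all (fun i => i < size s) idx & occ_at s tau adj idx])
          (vcontains s tau adj).
Proof.
apply: (iffP hasP).
- move=> [m _ Hocc]; exists (mask m (iota 0 (size s))); split => //.
  + exact: (sorted_mask ltn_trans m (iota_ltn_sorted 0 _)).
  + by apply/allP => i /mem_mask; rewrite mem_iota.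
- move=> [idx [Hs Ha Hocc]].
  exists [seq i \in idx | i <- iota 0 (size s)].
  + by apply: all_masks_mem; rewrite size_map size_iota.
  have -> : mask [seq i \in idx | i <- iota 0 (size s)] (iota 0 (size s))
            = [seq i <- iota 0 (size s) | i \in idx] by rewrite filter_mask.
  have -> // : [seq i <- iota 0 (size s) | i \in idx] = idx.
  apply: (@irr_sorted_eq _ ltn ltn_trans ltnn) Hs _ => //.
  + exact: (sorted_filter ltn_trans _ (iota_ltn_sorted 0 _)).
  move=> i; rewrite mem_filter mem_iota add0n /=.
  case Hi: (i \in idx) => //=.
  by move/allP: Ha => /(_ i Hi).
Qed.

Lemma vc21 s : vcontains s [:: 2; 1] [::] = ~~ sorted leq s.
Proof.
apply/idP/idP.
- move/vcontainsP => [[|i [|j [|k idx]]] [Hs Ha Hocc]] //; try by case/and3P: Hocc.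
  move: Hs Ha Hocc => /= /andP [Hij _] /and3P [Hi Hj _].
  rewrite /occ_at /= !andbT => /andP [/andP [/eqP H1 _] /andP [/eqP H2 _]].
  have {H1} H3 : nth 0 s j < nth 0 s i by rewrite H2.
  apply/negP => Hsort.
  have := sorted_ltn_nth leq_trans 0 Hsort; move=> /(_ i j).
  rewrite !inE => /(_ Hi Hj Hij).
  by rewrite leqNgt H3.
- apply: contraR => Hn; apply/(sortedP 0) => i Hi.
  rewrite leqNgt; apply/negP => H; move/negP: Hn; apply; apply/vcontainsP.
  exists [:: i; i.+1]; split => //=.
  + by rewrite ltnSn.
  + by rewrite Hi (ltn_trans (ltnSn i) Hi).
  + by rewrite /occ_at /= !andbT !ltnn H (ltnNge (nth 0 s i)) (ltnW H).
Qed.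

Lemma occ123 s i j k : occ_at s [:: 1; 2; 3] [:: 1] [:: i; j; k] =
  [&& nth 0 s i < nth 0 s j, nth 0 s j < nth 0 s k & k == j.+1].
Proof.
rewrite /occ_at /=.
change (1 < 2) with true; change (1 < 3) with true; change (2 < 3) with true.
change (2 < 1) with false; change (3 < 1) with false; change (3 < 2) with false.
change (1 < 1) with false; change (2 < 2) with false; change (3 < 3) with false.
rewrite !ltnn !eqb_id !eqbF_neg /= !andbT.
set a := nth 0 s i; set b := nth 0 s j; set c := nth 0 s k.
case: (k == j.+1); rewrite ?andbT ?andbF //.
apply/idP/idP; first by case/and4P => /andP [-> _] /andP [_ ->].
case/andP => H1 H2; apply/and4P; split; rewrite ?negb_and; try apply/andP; try split; lia.
Qed.

Fixpoint asc_above (y : nat) (s : seq nat) : bool :=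
  if s is a :: t then (if t is b :: _ then (y < a) && (a < b) else false) || asc_above y t
  else false.

Fixpoint c123 (s : seq nat) : bool :=
  if s is y :: t then asc_above y t || c123 t else false.

Lemma asc_aboveP y s :
  asc_above y s <-> exists j, j.+1 < size s /\ y < nth 0 s j < nth 0 s j.+1.
Proof.
elim: s => [|a t IH] /=; first by split => // [[j [H _]]].
split.
- case/orP.
  + by case: t {IH} => // b t' H; exists 0.
  + by case/IH => j [H1 H2]; exists j.+1.
- move=> [[|j] [H1 H2]].
  + by case: t IH H1 H2 => // b t' _ _ /= ->.
  + by apply/orP; right; apply/IH; exists j.
Qed.

Lemma c123P s :
  c123 s <-> exists i j, [/\ i < j, j.+1 < size s & nth 0 s i < nth 0 s j < nth 0 s j.+1].
Proof.
elim: s => [|y t IH] /=; first by split => // [[i [j [_ H _]]]].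
split.
- case/orP.
  + by case/asc_aboveP => j [H1 H2]; exists 0, j.+1.
  + by case/IH => i [j [H1 H2 H3]]; exists i.+1, j.+1.
- move=> [[|i] [[|j] [H1 H2 H3]]] //.
  + by apply/orP; left; apply/asc_aboveP; exists j.
  + by apply/orP; right; apply/IH; exists i, j.
Qed.

Lemma vc123 s : vcontains s [:: 1; 2; 3] [:: 1] = c123 s.
Proof.
apply/idP/idP.
- move/vcontainsP => [[|i [|j [|k [|l idx]]]] [Hs Ha Hocc]] //; try by case/and3P: Hocc.
  move: Hocc; rewrite occ123 => /and3P [H1 H2 /eqP Hk]; subst k.
  move: Hs Ha => /= /and3P [Hij _ _] /and4P [_ _ Hk _].
  by apply/c123P; exists i, j; split => //; rewrite H1.
- case/c123P => i [j [Hij Hj Hv]]; apply/vcontainsP; exists [:: i; j; j.+1]; split.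
  + by rewrite /= Hij ltnSn.
  + by rewrite /= Hj (ltn_trans (ltnSn j) Hj) (ltn_trans Hij (ltn_trans (ltnSn j) Hj)).
  + by rewrite occ123 eqxx andbT.
Qed.

Fixpoint run (avoid : seq nat -> bool) (input st : seq nat) : seq nat * seq nat :=
  match input with
  | [::] => ([::], st)
  | x :: r => let: (p, s) := push_pop avoid x st in
              let: (Ot, s2) := run avoid r s in (p ++ Ot, s2)
  end.

Lemma SC_aux_run avoid input st :
  SC_aux avoid input st = (run avoid input st).1 ++ (run avoid input st).2.
Proof.
elim: input st => [|x r IH] st //=.
case: (push_pop avoid x st) => p s; rewrite IH.
by case: (run avoid r s) => Ot s2 /=; rewrite catA.
Qed.

Lemma run_rcons avoid input x st :
  run avoid (rcons input x) st =
  let: (Ot, s) := run avoid input st in let: (p, s') := push_pop avoid x s in (Ot ++ p, s').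
Proof.
elim: input st => [|y r IH] st /=.
- by case: (push_pop avoid x st) => p s; rewrite cats0.
- case: (push_pop avoid y st) => p s; rewrite IH.
  case: (run avoid r s) => Ot s2; case: (push_pop avoid x s2) => p' s'.
  by rewrite catA.
Qed.

Lemma push_pop_split avoid x st :
  exists p s', push_pop avoid x st = (p, x :: s') /\ st = p ++ s'.
Proof.
elim: st => [|y st IH] /=.
- by case: (avoid [:: x]); exists [::], [::].
- case: (avoid (x :: y :: st)); first by exists [::], (y :: st).
  case: IH => p [s' [-> ->]]; by exists (y :: p), s'.
Qed.

Lemma run_perm avoid input st :
  perm_eq ((run avoid input st).1 ++ (run avoid input st).2) (input ++ st).
Proof.
elim: input st => [|x r IH] st //=.
case: (push_pop_split avoid x st) => p [s' [-> ->]].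
have := IH (x :: s'); case: (run avoid r (x :: s')) => Ot s2 /= /permP H.
apply/permP => q; rewrite -catA count_cat H /= !count_cat /=; lia.
Qed.

Lemma SC_perm avoid tau : perm_eq (SC avoid tau) tau.
Proof. by rewrite /SC SC_aux_run; have := run_perm avoid tau [::]; rewrite cats0. Qed.

Definition bef (s : seq nat) a b := [&& a \in s, b \in s & index a s < index b s].

Lemma bef_trans s a b c : bef s a b -> bef s b c -> bef s a c.
Proof. by case/and3P => Ha _ H1 /and3P [_ Hc H2]; rewrite /bef Ha Hc (ltn_trans H1 H2). Qed.

Lemma bef_neq s a b : bef s a b -> a != b.
Proof. by case/and3P => _ _ H; apply/eqP => E; rewrite E ltnn in H. Qed.

Lemma bef_asym s a b : bef s a b -> bef s b a -> False.
Proof. by case/and3P => _ _ H1 /and3P [_ _ H2]; have := ltn_trans H1 H2; rewrite ltnn. Qed.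

Lemma bef_total s a b : a \in s -> b \in s -> a != b -> bef s a b \/ bef s b a.
Proof.
move=> Ha Hb Hab; rewrite /bef Ha Hb /=.
case: (ltngtP (index a s) (index b s)) => H; [by left|by right|].
by move: Hab; rewrite -(nth_index 0 Ha) -(nth_index 0 Hb) H eqxx.
Qed.

Lemma bef_cat_l s1 s2 a b : bef s1 a b -> bef (s1 ++ s2) a b.
Proof.
case/and3P => Ha Hb H; rewrite /bef !mem_cat Ha Hb /= !index_cat Ha Hb //.
Qed.

Lemma bef_cat_lr s1 s2 a b : uniq (s1 ++ s2) -> a \in s1 -> b \in s2 -> bef (s1 ++ s2) a b.
Proof.
rewrite cat_uniq => /and3P [_ Hd _] Ha Hb.
have Hb1 : b \notin s1 by apply: contra Hd => Hb1; apply/hasP; exists b.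
rewrite /bef !mem_cat Ha Hb orbT /= !index_cat Ha (negbTE Hb1).
by apply: (leq_trans (_ : _ < size s1)); [rewrite index_mem | rewrite leq_addr].
Qed.

Lemma bef_cat_r s1 s2 a b : a \notin s1 -> b \notin s1 -> bef s2 a b -> bef (s1 ++ s2) a b.
Proof.
move=> Ha1 Hb1 /and3P [Ha Hb H].
by rewrite /bef !mem_cat Ha Hb !orbT /= !index_cat (negbTE Ha1) (negbTE Hb1) ltn_add2l.
Qed.

Lemma bef_catE s1 s2 a b : uniq (s1 ++ s2) -> bef (s1 ++ s2) a b ->
  [\/ bef s1 a b, (a \in s1) && (b \in s2) | bef s2 a b].
Proof.
move=> Hu /and3P [Ha Hb H]; move: Ha Hb H; rewrite !mem_cat !index_cat.
have [Ha1|Ha1] := boolP (a \in s1); have [Hb1|Hb1] := boolP (b \in s1) => /= Ha Hb H.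
- by constructor 1; apply/and3P.
- by constructor 2.
- by move: H; rewrite ltnNge (leq_trans (ltnW _) (leq_addr _ _)) ?index_mem.
- by constructor 3; rewrite /bef Ha Hb -(ltn_add2l (size s1)).
Qed.

Lemma bef_mem s a b : bef s a b -> (a \in s) && (b \in s).
Proof. by case/and3P => -> ->. Qed.


Lemma bef_rcons s y a b : uniq (rcons s y) ->
  bef (rcons s y) a b = bef s a b || ((b == y) && (a \in s)).
Proof.
move=> Hu; rewrite -cats1 in Hu *; apply/idP/idP.
- case/(bef_catE Hu) => [->//| /andP [Ha] | /and3P [] ]; rewrite ?inE.
  + by move=> ->; rewrite Ha orbT.
  + by move=> /eqP -> /eqP ->; rewrite ltnn.
- case/orP => [/bef_cat_l -> // | /andP [/eqP -> Ha]].
  by apply: bef_cat_lr => //; rewrite inE.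
Qed.

Lemma bef_rcons_last s y b : uniq (rcons s y) -> bef (rcons s y) y b = false.
Proof.
move=> Hu; rewrite bef_rcons //; apply/negP => /orP [/bef_mem /andP [Hy _] | /andP [_ Hy]];
by move: Hu; rewrite rcons_uniq Hy.
Qed.

Lemma bef_insert s1 s2 x a b : uniq (s1 ++ x :: s2) -> a != x -> b != x ->
  bef (s1 ++ s2) a b -> bef (s1 ++ x :: s2) a b.
Proof.
move=> Hu Hax Hbx.
have Hu' : uniq (s1 ++ s2).
  by move: Hu; rewrite !cat_uniq /= => /and4P [-> /norP [_ ->] _ ->].
case/(bef_catE Hu') => [/bef_cat_l -> // | /andP [Ha Hb] | H].
- by apply: bef_cat_lr => //; rewrite inE Hb orbT.
- have Hn : forall c, bef s2 c c = false by move=> c; rewrite /bef ltnn !andbF.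
  move: Hu; rewrite cat_uniq => /and3P [_ Hd _].
  case/and3P: (H) => Ha Hb _.
  apply: bef_cat_r.
  + by apply: contra Hd => Ha1; apply/hasP; exists a => //; rewrite inE Ha orbT.
  + by apply: contra Hd => Hb1; apply/hasP; exists b => //; rewrite inE Hb orbT.
  rewrite -cat1s; apply: bef_cat_r => //; by rewrite inE.
Qed.

Definition A231 (s : seq nat) : bool :=
  all (fun b => all (fun c => all (fun a => ~~ [&& bef s b c, bef s c a & (a < b < c)]) s) s) s.

Lemma A231P s : reflect (forall b c a, bef s b c -> bef s c a -> ~~ (a < b < c)) (A231 s).
Proof.
apply: (iffP allP).
- move=> H b c a Hbc Hca.
  case/andP: (bef_mem Hbc) => Hb Hc; case/andP: (bef_mem Hca) => _ Ha.
  move/allP: (H b Hb) => /(_ c Hc) /allP /(_ a Ha).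
  by rewrite Hbc Hca.
- move=> H b Hb; apply/allP => c Hc; apply/allP => a Ha; apply/negP => /and3P [H1 H2 H3].
  by move: (H b c a H1 H2); rewrite H3.
Qed.

Lemma A231_insert s1 s2 x : uniq (s1 ++ x :: s2) -> A231 (s1 ++ x :: s2) -> A231 (s1 ++ s2).
Proof.
move=> Hu /A231P H; apply/A231P => b c a Hbc Hca.
have Hnx : forall d, d \in s1 ++ s2 -> d != x.
  move=> d Hd; apply/eqP => E; subst d; move: Hu Hd.
  rewrite cat_uniq /= mem_cat => /and4P [_ Hd Hx _] /orP [H1|H2].
  - by rewrite H1 in Hd.
  - by rewrite H2 in Hx.
case/andP: (bef_mem Hbc) => Hb Hc; case/andP: (bef_mem Hca) => _ Ha.
by apply: H; apply: bef_insert => //; apply: Hnx.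
Qed.

Lemma ltn_tr : transitive ltn. Proof. exact: ltn_trans. Qed.
Lemma gtn_tr : transitive gtn. Proof. move=> y x z /= h1 h2; exact: ltn_trans h2 h1. Qed.

Definition av21 := fun st : seq nat => ~~ vcontains st [:: 2; 1] [::].

Lemma sorted_cat_ltn s1 s2 : sorted ltn (s1 ++ s2) =
  [&& sorted ltn s1, sorted ltn s2 & all (fun a => all (fun b => a < b) s2) s1].
Proof.
elim: s1 => [|a s1 IH] /=; first by rewrite andbT.
rewrite !path_sortedE ?IH ?all_cat; try exact: ltn_trans.
by case: (all _ s1); case: (all _ s2); case: (sorted ltn s1); case: (sorted ltn s2);
   case: (all _ s1); rewrite /= ?andbF.
Qed.

Lemma push_pop_cons avoid x y st : push_pop avoid x (y :: st) =
  if avoid (x :: y :: st) then ([::], x :: y :: st)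
  else let: (p, s) := push_pop avoid x st in (y :: p, s).
Proof. by []. Qed.

Lemma av21E s : av21 s = sorted leq s.
Proof. by rewrite /av21 vc21 negbK. Qed.

Lemma pp21 y st : sorted ltn st -> y \notin st ->
  push_pop av21 y st = ([seq a <- st | a < y], y :: [seq a <- st | y < a]).
Proof.
elim: st => [|a st IH] Hs Hy; first by rewrite /= /av21 /=.
rewrite push_pop_cons av21E.
move: Hy; rewrite inE negb_or => /andP [Hya Hy].
have Hs' : sorted ltn st by move: Hs; rewrite /= path_sortedE => [/andP []//|]; exact: ltn_trans.
have Hall : all (fun b => a < b) st by move: Hs; rewrite /= path_sortedE => [/andP []//|]; exact: ltn_trans.
case: (ltngtP y a) => Hlt.
- have -> : sorted leq [:: y, a & st].
    have : sorted leq (a :: st) by apply: (sub_sorted _ Hs) => u v /ltnW.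
    by rewrite /= (ltnW Hlt).
  rewrite /= Hlt (ltnNge a y) (ltnW Hlt) /=.
  have E1 : [seq a0 <- st | a0 < y] = [::].
    apply/eqP; rewrite -[_ == _]negbK -has_filter; apply/hasPn => b Hb.
    by move/allP: Hall => /(_ b Hb) Hab; rewrite -leqNgt ltnW // (ltn_trans Hlt Hab).
  have E2 : [seq a0 <- st | y < a0] = st.
    apply/all_filterP; apply/allP => b Hb.
    by move/allP: Hall => /(_ b Hb) Hab; rewrite (ltn_trans Hlt Hab).
  by rewrite E1 E2.
- have -> : sorted leq [:: y, a & st] = false by rewrite /= leqNgt Hlt.
  by rewrite IH //= Hlt ltnNge (ltnW Hlt).
- by rewrite Hlt eqxx in Hya.
Qed.

Definition laterbig (s : seq nat) a := has (fun c => bef s a c && (a < c)) s.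

Lemma laterbig_rcons s y a : uniq (rcons s y) -> a \in s ->
  laterbig (rcons s y) a = laterbig s a || (a < y).
Proof.
move=> Hu Ha; rewrite /laterbig has_rcons bef_rcons // eqxx Ha orbT /= orbC.
congr (_ || _); apply: eq_in_has => c Hc.
rewrite bef_rcons //; have -> : (c == y) = false; last by rewrite orbF.
by apply/negP => /eqP E; move: Hu; rewrite rcons_uniq -E Hc.
Qed.

Lemma laterbig_last s y : uniq (rcons s y) -> laterbig (rcons s y) y = false.
Proof.
move=> Hu; rewrite /laterbig; apply/hasPn => c _.
by rewrite bef_rcons_last.
Qed.

Lemma A231_rcons s y : uniq (rcons s y) ->
  A231 (rcons s y) = A231 s && all (fun b => ~~ (laterbig s b && (y < b))) s.
Proof.
move=> Hu; have Hy : y \notin s by move: Hu; rewrite rcons_uniq => /andP [].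
have Hbs : forall b c, c \in s -> bef (rcons s y) b c = bef s b c.
  move=> b c Hc; rewrite bef_rcons //; have -> : (c == y) = false; last by rewrite orbF.
  by apply/negP => /eqP E; move: Hy; rewrite -E Hc.
apply/A231P/andP.
- move=> H; split.
  + apply/A231P => b c a Hbc Hca; apply: H; rewrite Hbs //.
    * by case/andP: (bef_mem Hbc).
    * by case/andP: (bef_mem Hca).
  + apply/allP => b Hb; apply/negP => /andP [/hasP [c Hc /andP [Hbc Hlt]] Hyb].
    have := H b c y; rewrite Hbs // bef_rcons // eqxx.
    case/andP: (bef_mem Hbc) => _ ->; rewrite orbT => /(_ Hbc isT).
    by rewrite Hyb Hlt.
- move=> [/A231P H /allP H2] b c a Hbc Hca.
  move: Hca; rewrite bef_rcons // => /orP [Hca | /andP [/eqP Ea Hc]].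
  + have Hc : c \in s by case/andP: (bef_mem Hca).
    by apply: H => //; rewrite -Hbs.
  + subst a; have Hbc' : bef s b c by rewrite -Hbs.
    have Hb : b \in s by case/andP: (bef_mem Hbc').
    apply/negP => /andP [H1 H3]; move: (H2 b Hb); rewrite H1 andbT.
    by apply/negP/negPn; apply/hasP; exists c => //; rewrite Hbc' H3.
Qed.

Lemma all_split_y a st y : y \notin st ->
  all (fun b => a < b) ([seq b <- st | b < y] ++ y :: [seq b <- st | y < b]) =
  all (fun b => a < b) st && (a < y).
Proof.
move=> Hy; apply/idP/idP.
- move/allP => H; rewrite H ?mem_cat ?inE ?eqxx ?orbT // andbT.
  apply/allP => b Hb; apply: H; rewrite mem_cat inE !mem_filter Hb /= andbT.
  case: (ltngtP b y) => //= E; by rewrite E Hb in Hy.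
- case/andP => /allP H Hay; apply/allP => b.
  rewrite mem_cat inE !mem_filter => /or3P [/andP [_ Hb] | /eqP -> | /andP [_ Hb]] //; exact: H.
Qed.

Lemma ins_sorted Ot st y : sorted ltn st -> y \notin st ->
  sorted ltn ((Ot ++ [seq a <- st | a < y]) ++ y :: [seq a <- st | y < a]) =
  sorted ltn (Ot ++ st) && all (fun b => b < y) Ot.
Proof.
move=> Hs Hy.
have Hmid : sorted ltn ([seq a <- st | a < y] ++ y :: [seq a <- st | y < a]).
  rewrite sorted_cat_ltn (sorted_filter ltn_trans _ Hs) /=.
  rewrite path_sortedE; last exact: ltn_trans.
  rewrite (sorted_filter ltn_trans _ Hs) andbT.
  have -> : all (fun b => y < b) [seq a <- st | y < a] by apply/allP => b; rewrite mem_filter => /andP [].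
  apply/allP => a; rewrite mem_filter => /andP [Ha _]; rewrite Ha /=.
  by apply/allP => b; rewrite mem_filter => /andP [Hb _]; apply: ltn_trans Ha Hb.
rewrite -catA [in LHS]sorted_cat_ltn Hmid [in RHS]sorted_cat_ltn Hs /=.
rewrite (eq_all (a2 := predI (fun a => all (fun b => a < b) st) (fun a => a < y))); last first.
  by move=> a; rewrite /= all_split_y.
by rewrite all_predI andbA.
Qed.

Lemma knuth_inv sig : uniq sig ->
  let: (Ot, st) := run av21 sig [::] in
  [/\ sorted ltn st, (forall a, (a \in Ot) = (a \in sig) && laterbig sig a)
    & sorted ltn (Ot ++ st) = A231 sig].
Proof.
elim/last_ind: sig => [|sig y IH] Hu.
- by split => //=; apply/A231P => b c a /bef_mem.
have Hu0 : uniq sig by move: Hu; rewrite rcons_uniq => /andP [].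
have Hy : y \notin sig by move: Hu; rewrite rcons_uniq => /andP [].
have Hp := run_perm av21 sig [::]; rewrite cats0 in Hp.
move: (IH Hu0) Hp; rewrite run_rcons.
case: (run av21 sig [::]) => Ot st [Hst HO HA] Hp.
have Hmem : forall a, (a \in sig) = (a \in Ot) || (a \in st) by move=> a; rewrite -(perm_mem Hp) mem_cat.
have Hyst : y \notin st by apply: contra Hy; rewrite Hmem => ->; rewrite orbT.
rewrite pp21 //; split.
- rewrite /= path_sortedE; last exact: ltn_trans.
  rewrite (sorted_filter ltn_trans _ Hst) andbT.
  by apply/allP => b; rewrite mem_filter => /andP [].
- move=> a; rewrite mem_cat mem_filter mem_rcons inE.
  have [Ha|Ha] := boolP (a \in sig).
  + rewrite laterbig_rcons // orbT /= HO Ha /=.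
    have [Hl|Hl] := boolP (laterbig sig a) => //=.
    have : a \in Ot = false by rewrite HO Ha (negbTE Hl).
    by move=> HOa; move: Ha; rewrite Hmem HOa /= => ->; rewrite andbT.
  + rewrite orbF; have [Eay|Eay] := eqVneq a y.
    * subst a; rewrite laterbig_last // andbF.
      apply/negP => /orP [H | /andP [_ H]]; [| by rewrite H in Hyst].
      by move: Hy; rewrite Hmem H.
    * rewrite /=; apply/negP => /orP [H | /andP [_ H]]; by move: Ha; rewrite Hmem H ?orbT.
- rewrite ins_sorted // HA A231_rcons //; congr (_ && _).
  rewrite -[RHS](@eq_in_all _ (fun b => ~~ ((b \in Ot) && (y < b)))); last first.
    by move=> b Hb; rewrite HO Hb.
  rewrite (eq_all_r (s2 := Ot ++ st)); last by move=> b; rewrite Hmem mem_cat.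
  rewrite all_cat.
  have -> : all (fun b => ~~ ((b \in Ot) && (y < b))) st = true.
    apply/allP => b Hb; apply/negP => /andP [H1 _].
    by move: Hu0 (perm_uniq Hp); rewrite -(perm_uniq Hp) cat_uniq => /and3P [_ /hasPn /(_ b Hb)]; rewrite H1.
  rewrite andbT; apply: eq_in_all => b Hb; rewrite Hb /= -leqNgt ltn_neqAle.
  have -> // : (b != y) by apply/eqP => E; subst b; move: Hy; rewrite Hmem Hb.
Qed.

Lemma west_sorted sig : uniq sig -> sorted ltn (west_s sig) = A231 sig.
Proof.
move=> Hu; change (west_s sig) with (SC av21 sig); rewrite /SC SC_aux_run.
by have := knuth_inv Hu; case: (run av21 sig [::]) => Ot st [].
Qed.

Lemma sorted_cat_tr (r : rel nat) s1 s2 : transitive r -> sorted r (s1 ++ s2) =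
  [&& sorted r s1, sorted r s2 & all (fun a => all (r a) s2) s1].
Proof.
move=> tr; elim: s1 => [|a s1 IH] /=; first by rewrite andbT.
rewrite !path_sortedE // IH all_cat.
by case: (all _ s1); case: (all _ s2); case: (sorted r s1); case: (sorted r s2);
   case: (all _ s1); rewrite /= ?andbF.
Qed.

Lemma bef_sorted (r : rel nat) s a b : transitive r -> irreflexive r -> sorted r s ->
  a \in s -> b \in s -> bef s a b = r a b.
Proof.
move=> tr irr Hs Ha Hb; rewrite /bef Ha Hb /=.
have H := sorted_ltn_index tr Hs.
apply/idP/idP; first by apply: H.
move=> Hab; case: (ltngtP (index a s) (index b s)) => // E.
- by have := tr _ _ _ Hab (H _ _ Hb Ha E); rewrite irr.
- by move: Hab; rewrite -(nth_index 0 Ha) -(nth_index 0 Hb) E irr.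
Qed.

Lemma gtn_irr : irreflexive gtn. Proof. by move=> x; rewrite /= ltnn. Qed.
Lemma ltn_irr : irreflexive ltn. Proof. by move=> x; rewrite /= ltnn. Qed.

Lemma path_last_le (a : nat) s : path gtn a s -> last a s <= a.
Proof.
elim: s a => [|b s IH] a //= /andP [Hab Hp].
by apply: leq_trans (IH b Hp) (ltnW Hab).
Qed.

Lemma last_min (s : seq nat) : sorted gtn s -> forall v, v \in s -> last 0 s <= v.
Proof.
case: s => [|a s] //= Hs v.
elim: s a Hs => [|b s IH] a /=; first by rewrite inE => _ /eqP ->.
move=> /andP [Hab Hp]; rewrite inE => /orP [/eqP ->|Hv].
- by apply: leq_trans (path_last_le Hp) (ltnW Hab).
- exact: IH.
Qed.

Lemma last_eq_min (s : seq nat) m : sorted gtn s -> m \in s -> (forall v, v \in s -> m <= v) ->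
  last 0 s = m.
Proof.
move=> Hs Hm Hall; apply/eqP; rewrite eqn_leq last_min // Hall //.
by case: s Hs Hm {Hall} => //= a s _ _; have := mem_last a s.
Qed.

Definition av123 := fun st : seq nat => ~~ vcontains st [:: 1; 2; 3] [:: 1].

Lemma av123E s : av123 s = ~~ c123 s.
Proof. by rewrite /av123 vc123. Qed.

Lemma c123_cons y t : c123 (y :: t) = asc_above y t || c123 t.
Proof. by []. Qed.

Lemma asc_above_gtn y s : sorted gtn s -> asc_above y s = false.
Proof.
elim: s => [|a s IH] //= Hs; rewrite IH; last by move: Hs; case: s {IH} => // b s /= /andP [].
by case: s Hs {IH} => // b s /= /andP [Hba _]; rewrite (ltnNge a b) (ltnW Hba) andbF.
Qed.

Lemma c123_gtn s : sorted gtn s -> c123 s = false.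
Proof.
elim: s => [|a s IH] //= Hs; rewrite asc_above_gtn ?IH //;
by move: Hs; case: s {IH} => // b s /= /andP [].
Qed.

Lemma asc_above_cat y s1 s2 : asc_above y (s1 ++ s2) =
  [|| asc_above y s1, [&& s1 != [::], s2 != [::], y < last 0 s1 & last 0 s1 < head 0 s2]
    | asc_above y s2].
Proof.
elim: s1 => [|a s1 IH] //=.
rewrite IH; case: s1 {IH} => [|b s1] /=.
- by case: s2 => [|c s2] //=; rewrite ?orbF.
- by rewrite !orbA.
Qed.

Lemma c123_VW V W : sorted gtn V -> sorted gtn W -> (V != [::] -> W != [::] -> last 0 V < head 0 W) ->
  c123 (V ++ W) = false.
Proof.
elim: V => [|v V IH] /= HV HW Hj; first exact: c123_gtn.
have HV' : sorted gtn V by move: HV; case: V {IH Hj} => // a V /= /andP [].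
rewrite IH //; last first.
  by case: V {IH HV HV'} Hj => // a V Hj _ HW0; exact: Hj isT HW0.
rewrite asc_above_cat asc_above_gtn // asc_above_gtn // orbF /=.
case: V HV {IH HV' Hj} => [|a V] //= HV.
case/andP: HV => Hav Hp.
have H : last a V <= v by apply: leq_trans (path_last_le Hp) (ltnW Hav).
by rewrite ltnNge H /= !andbF.
Qed.

Lemma pp_A x W : sorted gtn W -> push_pop av123 x W = ([::], x :: W).
Proof.
move=> HW; case: W HW => [|w W] HW.
- by [].
- by rewrite (push_pop_cons av123) av123E c123_cons asc_above_gtn // (c123_gtn HW).
Qed.

Lemma pp_B x V W : V != [::] -> W != [::] -> sorted gtn V -> sorted gtn W ->
  last 0 V < head 0 W -> x < last 0 V -> push_pop av123 x (V ++ W) = (V, x :: W).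
Proof.
move=> HV0 HW0 HV HW Hj Hx.
elim: V HV0 HV Hj Hx => [|v V IH] // _ HV Hj Hx.
have HV' : sorted gtn V by move: HV; case: V {IH Hj Hx} => // a V /= /andP [].
rewrite cat_cons (push_pop_cons av123) av123E c123_cons -cat_cons asc_above_cat HW0 Hx Hj.
rewrite /= orbT /=.
case: V IH HV HV' Hj Hx => [|a V] IH HV HV' Hj Hx.
- by rewrite /= pp_A.
- by rewrite IH.
Qed.

Lemma pp_C x V W : V != [::] -> sorted gtn V -> sorted gtn W ->
  (W != [::] -> last 0 V < head 0 W) -> last 0 V < x -> push_pop av123 x (V ++ W) = ([::], x :: V ++ W).
Proof.
move=> HV0 HV HW Hj Hx.
case: V HV0 HV Hj Hx => [|v V] // _ HV Hj Hx.
rewrite cat_cons (push_pop_cons av123) av123E c123_cons -cat_cons.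
rewrite asc_above_cat asc_above_gtn // asc_above_gtn // orbF.
have -> : c123 ((v :: V) ++ W) = false by apply: c123_VW => // _; exact: Hj.
by rewrite orbF ltnNge (ltnW Hx) /= andbF.
Qed.

(* ---------- the class Av(132, 3214, 4213) ---------- *)
Definition no132 (s : seq nat) : bool :=
  all (fun a => all (fun b => all (fun c => ~~ [&& bef s a b, bef s b c & a < c < b]) s) s) s.
Definition no4 (s : seq nat) : bool :=
  all (fun c => all (fun b => all (fun a => all (fun d =>
    ~~ [&& bef s c b, bef s b a, bef s a d, a < b < c & b < d]) s) s) s) s.
Definition Pb s := no132 s && no4 s.

Lemma no132P s : reflect (forall a b c, bef s a b -> bef s b c -> ~~ (a < c < b)) (no132 s).
Proof.
apply: (iffP allP).
- move=> H a b c Hab Hbc.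
  case/andP: (bef_mem Hab) => Ha Hb; case/andP: (bef_mem Hbc) => _ Hc.
  move/allP: (H a Ha) => /(_ b Hb) /allP /(_ c Hc).
  by rewrite Hab Hbc.
- move=> H a Ha; apply/allP => b Hb; apply/allP => c Hc; apply/negP => /and3P [H1 H2 H3].
  by move: (H a b c H1 H2); rewrite H3.
Qed.

Lemma no4P s : reflect (forall c b a d, bef s c b -> bef s b a -> bef s a d -> ~~ ((a < b < c) && (b < d)))
  (no4 s).
Proof.
apply: (iffP allP).
- move=> H c b a d Hcb Hba Had.
  case/andP: (bef_mem Hcb) => Hc Hb; case/andP: (bef_mem Had) => Ha Hd.
  move/allP: (H c Hc) => /(_ b Hb) /allP /(_ a Ha) /allP /(_ d Hd).
  by rewrite Hcb Hba Had.
- move=> H c Hc; apply/allP => b Hb; apply/allP => a Ha; apply/allP => d Hd.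
  apply/negP => /and5P [H1 H2 H3 H4 H5].
  by move: (H c b a d H1 H2 H3); rewrite H4 H5.
Qed.

Definition viola (s : seq nat) x := has (fun y => has (fun z => [&& bef s y z, y < x & x < z]) s) s.
Definition violb (s : seq nat) x :=
  has (fun c => has (fun b => has (fun a => [&& bef s c b, bef s b a, a < b, b < c & b < x]) s) s) s.

Lemma bef_rcons_in s x a b : uniq (rcons s x) -> b \in s -> bef (rcons s x) a b = bef s a b.
Proof.
move=> Hu Hb; rewrite bef_rcons //; have -> : (b == x) = false; last by rewrite orbF.
by apply/negP => /eqP E; move: Hu; rewrite rcons_uniq -E Hb.
Qed.

Lemma bef_rcons_x s x a : uniq (rcons s x) -> a \in s -> bef (rcons s x) a x.
Proof. by move=> Hu Ha; rewrite bef_rcons // eqxx Ha orbT. Qed.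

Lemma bef_rcons_l s x a b : uniq (rcons s x) -> bef s a b -> bef (rcons s x) a b.
Proof. by move=> Hu H; rewrite bef_rcons // H. Qed.

Lemma Pb_rcons s x : uniq (rcons s x) ->
  Pb (rcons s x) = [&& Pb s, ~~ viola s x & ~~ violb s x].
Proof.
move=> Hu; have Hx : x \notin s by move: Hu; rewrite rcons_uniq => /andP [].
rewrite /Pb; apply/idP/idP.
- case/andP => /no132P H1 /no4P H2; apply/and3P; split; [apply/andP; split| |].
  + apply/no132P => a b c Hab Hbc; apply: H1; exact: bef_rcons_l.
  + apply/no4P => c b a d H3 H4 H5; apply: H2; exact: bef_rcons_l.
  + apply/hasPn => y Hy; apply/hasPn => z Hz; apply/negP => /and3P [Hyz H6 H7].
    have := H1 y z x (bef_rcons_l Hu Hyz) (bef_rcons_x Hu Hz).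
    by rewrite H6 H7.
  + apply/hasPn => c Hc; apply/hasPn => b Hb; apply/hasPn => a Ha; apply/negP.
    move=> /and5P [H3 H4 H5 H6 H7].
    have := H2 c b a x (bef_rcons_l Hu H3) (bef_rcons_l Hu H4) (bef_rcons_x Hu Ha).
    by rewrite H5 H6 H7.
- case/and3P => /andP [/no132P H1 /no4P H2] /hasPn Ha /hasPn Hb; apply/andP; split.
  + apply/no132P => a b c Hab Hbc.
    move: Hbc; rewrite bef_rcons // => /orP [Hbc | /andP [/eqP Ec Hb']].
    * have Hb' : b \in s by case/andP: (bef_mem Hbc).
      by apply: H1 => //; rewrite -(bef_rcons_in _ Hu Hb').
    * subst c; have Hab' : bef s a b by rewrite -(bef_rcons_in _ Hu Hb').
      have Ha' : a \in s by case/andP: (bef_mem Hab').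
      move/hasPn: (Ha a Ha') => /(_ b Hb').
      by rewrite Hab' /=.
  + apply/no4P => c b a d Hcb Hba Had.
    move: Had; rewrite bef_rcons // => /orP [Had | /andP [/eqP Ed Ha']].
    * have Ha' : a \in s by case/andP: (bef_mem Had).
      have Hba' : bef s b a by rewrite -(bef_rcons_in _ Hu Ha').
      have Hb' : b \in s by case/andP: (bef_mem Hba').
      have Hcb' : bef s c b by rewrite -(bef_rcons_in _ Hu Hb').
      exact: H2.
    * subst d; have Hba' : bef s b a by rewrite -(bef_rcons_in _ Hu Ha').
      have Hb' : b \in s by case/andP: (bef_mem Hba').
      have Hcb' : bef s c b by rewrite -(bef_rcons_in _ Hu Hb').
      have Hc' : c \in s by case/andP: (bef_mem Hcb').
      move/hasPn: (Hb c Hc') => /(_ b Hb') /hasPn /(_ a Ha').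
      rewrite Hcb' Hba' /=; apply: contra => /andP [/andP [-> ->] ->].
      by [].
Qed.

Lemma disj (s1 s2 : seq nat) (a : nat) : uniq (s1 ++ s2) -> a \in s1 -> a \in s2 -> False.
Proof.
rewrite cat_uniq => /and3P [_ /hasPn H _] H1 H2.
by move: (H a H2); rewrite H1.
Qed.

Lemma bef_catr s1 s2 a b : uniq (s1 ++ s2) -> bef s2 a b -> bef (s1 ++ s2) a b.
Proof.
move=> Hu Hab; case/andP: (bef_mem Hab) => Ha Hb.
apply: bef_cat_r => //; apply/negP => H; [exact: (disj Hu H Ha) | exact: (disj Hu H Hb)].
Qed.

Lemma bef_in_left s1 s2 a b : uniq (s1 ++ s2) -> bef (s1 ++ s2) a b -> b \in s1 -> bef s1 a b.
Proof.
move=> Hu H Hb; case/(bef_catE Hu): H => [//| /andP [_ Hb2] | /bef_mem /andP [_ Hb2]];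
by case: (disj Hu Hb Hb2).
Qed.

Lemma bef_in_right s1 s2 a b : uniq (s1 ++ s2) -> bef (s1 ++ s2) a b -> a \in s2 -> bef s2 a b.
Proof.
move=> Hu H Ha; case/(bef_catE Hu): H => [/bef_mem /andP [Ha1 _] | /andP [Ha1 _] | //];
by case: (disj Hu Ha1 Ha).
Qed.

Lemma bef_head a s b : a \notin s -> b \in s -> bef (a :: s) a b.
Proof.
move=> Ha Hb; rewrite /bef !inE eqxx Hb orbT /= eqxx.
by case: eqVneq => // E; subst b; rewrite Hb in Ha.
Qed.

Lemma head_rev (R : seq nat) : head 0 (rev R) = last 0 R.
Proof. by case/lastP: R => [|R u] //; rewrite rev_rcons last_rcons. Qed.

Lemma last_in (R : seq nat) : R != [::] -> last 0 R \in R.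
Proof. by case/lastP: R => [|R u] // _; rewrite last_rcons mem_rcons inE eqxx. Qed.

Lemma head_in (S : seq nat) : S != [::] -> head 0 S \in S.
Proof. by case: S => // a S _; rewrite inE eqxx. Qed.

Lemma sorted_rcons_ltn (R : seq nat) x : sorted ltn R -> (R == [::]) || (last 0 R < x) ->
  sorted ltn (rcons R x).
Proof.
case: R => [|r R] //= Hs Hl.
by rewrite rcons_path Hs.
Qed.

Lemma A231_gtn s : sorted gtn s -> A231 s.
Proof.
move=> Hs; apply/A231P => b c a Hbc _.
case/andP: (bef_mem Hbc) => Hb Hc.
move: Hbc; rewrite (bef_sorted gtn_tr gtn_irr Hs Hb Hc) /= => Hcb.
by apply/negP => /andP [_ H]; move: (ltn_trans H Hcb); rewrite ltnn.
Qed.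

Definition Inv2 (R S S1 : seq nat) (m : nat) (S2 V Ot st : seq nat) : Prop :=
  [/\ R != [::], S = S1 ++ m :: S2, head 0 S < last 0 R, all (fun z => m <= z) S &
   [/\ perm_eq Ot S1, perm_eq V (m :: S2), sorted gtn Ot, sorted gtn V &
     [/\ all (fun o => all (fun v => v < o) V) Ot & st = V ++ rev R]]].

Definition Inv (tau Ot st : seq nat) : Prop :=
  exists R S, [/\ tau = R ++ S, sorted ltn R &
    (S = [::] /\ Ot = [::] /\ st = rev R) \/
    (exists S1 m S2 V, Inv2 R S S1 m S2 V Ot st)].

Lemma Inv2_facts R S S1 m S2 V Ot st : uniq (R ++ S) -> Inv2 R S S1 m S2 V Ot st ->
  [/\ last 0 V = m, V != [::], m \in S, m < last 0 R &
   [/\ forall z, (z \in S) = (z \in Ot) || (z \in V),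
       forall z, z \in Ot -> m < z & head 0 (rev R) = last 0 R]].
Proof.
move=> Hu [HR HS Hh Hm [HO HV HsO HsV [HOV Hst]]].
have HmS : m \in S by rewrite HS mem_cat inE eqxx orbT.
have HmV : m \in V by rewrite (perm_mem HV) inE eqxx.
have Hmem : forall z, (z \in S) = (z \in Ot) || (z \in V).
  by move=> z; rewrite (perm_mem HO) (perm_mem HV) HS mem_cat.
have HuS : uniq S by move: Hu; rewrite cat_uniq => /and3P [].
split => //.
- apply: last_eq_min => // v Hv; move/allP: Hm; apply; by rewrite Hmem Hv orbT.
- by apply/negP => /eqP E; rewrite E in HmV.
- apply: leq_ltn_trans Hh; move/allP: Hm; apply.
  by rewrite HS; case: (S1) => [|a S1'] /=; rewrite ?inE ?eqxx.
split => //.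
- move=> z Hz; have HzS : z \in S by rewrite Hmem Hz.
  rewrite ltn_neqAle; move/allP: Hm => /(_ z HzS) ->; rewrite andbT.
  apply/negP => /eqP E; subst z.
  move: HuS; rewrite HS cat_uniq => /and3P [_ /hasPn /(_ m)].
  by move=> /(_ (mem_head _ _)); rewrite -(perm_mem HO) Hz.
- exact: head_rev.
Qed.

Lemma Inv_A231 tau Ot st : uniq tau -> uniq (Ot ++ st) -> Pb tau -> Inv tau Ot st -> A231 (Ot ++ st).
Proof.
move=> Hu Hu' /andP [/no132P H132 _] [R [S [Htau HR [[_ [-> ->]] | [S1 [m [S2 [V Hinv]]]]]]]].
- by apply: A231_gtn; rewrite /= rev_sorted.
subst tau.
have [HlV HV0 HmS Hml [Hmem Hm HhW]] := Inv2_facts Hu Hinv.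
have HW : sorted gtn (rev R) by rewrite rev_sorted.
case: Hinv => [HR0 HS Hh Hall [HO HV HsO HsV [HOV Hst]]]; subst st.
have HsD : sorted gtn (Ot ++ V).
  rewrite sorted_cat_tr; last exact: gtn_tr.
  by apply/and3P; split.
move: Hu'; rewrite catA => Hu'.
apply/A231P => b c a Hbc Hca; apply/negP => /andP [Hab Hbc'].
have Hirr : forall u w, bef (rev R) u w -> w < u.
  move=> u w H; case/andP: (bef_mem H) => Hu1 Hw1.
  by move: H; rewrite (bef_sorted gtn_tr gtn_irr HW Hu1 Hw1).
have HirrD : forall u w, bef (Ot ++ V) u w -> w < u.
  move=> u w H; case/andP: (bef_mem H) => Hu1 Hw1.
  by move: H; rewrite (bef_sorted gtn_tr gtn_irr HsD Hu1 Hw1).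
case/(bef_catE Hu'): Hbc => [/HirrD H | /andP [HbD HcW] | /Hirr H].
- by move: (ltn_trans Hbc' H); rewrite ltnn.
- case/(bef_catE Hu'): Hca => [/bef_mem /andP [HcD _] | /andP [HcD _] | Hca].
  + by case: (disj Hu' HcD HcW).
  + by case: (disj Hu' HcD HcW).
  have HaW : a \in rev R by case/andP: (bef_mem Hca).
  move: HcW HaW; rewrite !mem_rev => HcR HaR.
  have HbS : b \in S by rewrite Hmem -mem_cat.
  have Hac : bef R a c.
    by rewrite (bef_sorted ltn_tr ltn_irr HR HaR HcR); exact: ltn_trans Hab Hbc'.
  have := H132 a c b (bef_cat_l _ Hac) (bef_cat_lr Hu HcR HbS).
  by rewrite Hab Hbc'.
- by move: (ltn_trans Hbc' H); rewrite ltnn.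
Qed.

Lemma viol_of s x : uniq (rcons s x) -> Pb s -> ~~ Pb (rcons s x) -> viola s x || violb s x.
Proof. by move=> Hu HP; rewrite Pb_rcons // HP /= negb_and !negbK. Qed.

Lemma step1 R x : uniq (rcons R x) -> sorted ltn R -> Pb R ->
  Inv (rcons R x) [::] (x :: rev R) /\ (~~ Pb (rcons R x) -> ~~ A231 (x :: rev R)).
Proof.
move=> Hu HR HP.
have Hx : x \notin R by move: Hu; rewrite rcons_uniq => /andP [].
have HuR : uniq R by move: Hu; rewrite rcons_uniq => /andP [].
have HW : sorted gtn (rev R) by rewrite rev_sorted.
split.
- have [Hext | Hn] := boolP ((R == [::]) || (last 0 R < x)).
  + exists (rcons R x), [::]; split; first by rewrite cats0.
    * exact: sorted_rcons_ltn.
    * by left; split => //; rewrite rev_rcons.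
  + exists R, [:: x]; split; [by rewrite cats1 | done | right].
    exists [::], x, [::], [:: x].
    move: Hn; rewrite negb_or -leqNgt => /andP [HR0 Hxl].
    split => //=.
    * rewrite ltn_neqAle Hxl andbT; apply/negP => /eqP E.
      by move: Hx; rewrite E last_in.
    * by rewrite leqnn.
- move=> HnP; case/orP: (viol_of Hu HP HnP).
  + case/hasP => y Hy /hasP [z Hz /and3P [Hyz Hyx Hxz]].
    apply/negP => /A231P H.
    have Huo : uniq (x :: rev R) by rewrite /= mem_rev Hx rev_uniq.
    have H1 : bef (x :: rev R) x z by apply: bef_head; rewrite ?mem_rev.
    have H2 : bef (x :: rev R) z y.
      apply: (@bef_catr [:: x]) => //.
      by rewrite (bef_sorted gtn_tr gtn_irr HW) ?mem_rev //= (ltn_trans Hyx Hxz).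
    by move: (H x z y H1 H2); rewrite Hyx Hxz.
  + case/hasP => c Hc /hasP [b Hb /hasP [a Ha /and5P [Hcb _ _ Hbc _]]].
    move: Hcb; rewrite (bef_sorted ltn_tr ltn_irr HR Hc Hb) /= => Hcb'.
    by move: (ltn_trans Hcb' Hbc); rewrite ltnn.
Qed.

Lemma step2B R S S1 m S2 V Ot x : uniq (rcons (R ++ S) x) -> uniq ((Ot ++ V) ++ x :: rev R) ->
  sorted ltn R -> Inv2 R S S1 m S2 V Ot (V ++ rev R) -> x < m -> Pb (R ++ S) ->
  Inv (rcons (R ++ S) x) (Ot ++ V) (x :: rev R) /\
  (~~ Pb (rcons (R ++ S) x) -> ~~ A231 ((Ot ++ V) ++ x :: rev R)).
Proof.
move=> Hu Huo HR Hinv Hxm HP.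
have Hu0 : uniq (R ++ S) by move: Hu; rewrite rcons_uniq => /andP [].
have Hx : x \notin R ++ S by move: Hu; rewrite rcons_uniq => /andP [].
have [HlV HV0 HmS Hml [Hmem Hm HhW]] := Inv2_facts Hu0 Hinv.
have HW : sorted gtn (rev R) by rewrite rev_sorted.
case: Hinv => [HR0 HS Hh Hall [HO HV HsO HsV [HOV Hst]]].
have HS0 : S != [::] by rewrite HS; case: (S1).
split.
- exists R, (rcons S x); split; first by rewrite rcons_cat.
  + done.
  right; exists S, x, [::], [:: x]; split => //.
  + by rewrite cats1.
  + by case: (S) HS0 Hh.
  + rewrite all_rcons leqnn /=; apply/allP => z Hz.
    by move/allP: Hall => /(_ z Hz) Hmz; apply: ltnW (leq_trans Hxm Hmz).
  split => //.
  + by rewrite HS; apply: perm_cat.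
  + rewrite sorted_cat_tr; last exact: gtn_tr.
    by apply/and3P; split.
  split => //.
  apply/allP => o Ho /=; rewrite andbT.
  have HoS : o \in S by rewrite Hmem -mem_cat.
  by move/allP: Hall => /(_ o HoS) Hmo; apply: leq_trans Hxm Hmo.
- move=> HnP; case/orP: (viol_of Hu HP HnP).
  + case/hasP => y Hy /hasP [z Hz /and3P [Hyz Hyx Hxz]].
    have HyR : y \in R.
      move: Hy; rewrite mem_cat => /orP [//|HyS].
      by move/allP: Hall => /(_ y HyS) Hmy; move: (leq_ltn_trans Hmy (ltn_trans Hyx Hxm)); rewrite ltnn.
    set u := last 0 R.
    have HuR : u \in R by apply: last_in.
    have Hxu : x < u by apply: ltn_trans Hxm Hml.
    apply/negP => /A231P H.
    have Hux : uniq (x :: rev R) by move: Huo; rewrite cat_uniq => /and3P [].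
    have H1 : bef ((Ot ++ V) ++ x :: rev R) x u.
      by apply: bef_catr => //; apply: bef_head; rewrite ?mem_rev //; apply: contra Hx => H'; rewrite mem_cat H'.
    have H2 : bef ((Ot ++ V) ++ x :: rev R) u y.
      apply: bef_catr => //; apply: (@bef_catr [:: x]) => //.
      by rewrite (bef_sorted gtn_tr gtn_irr HW) ?mem_rev //= (ltn_trans Hyx Hxu).
    by move: (H x u y H1 H2); rewrite Hyx Hxu.
  + case/hasP => c Hc /hasP [b Hb /hasP [a Ha /and5P [Hcb Hba Hab Hbc Hbx]]].
    have HbR : b \in R.
      move: Hb; rewrite mem_cat => /orP [//|HbS].
      by move/allP: Hall => /(_ b HbS) Hmb; move: (leq_ltn_trans Hmb (ltn_trans Hbx Hxm)); rewrite ltnn.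
    have HcbR := bef_in_left Hu0 Hcb HbR.
    case/andP: (bef_mem HcbR) => HcR _.
    move: HcbR; rewrite (bef_sorted ltn_tr ltn_irr HR HcR HbR) /= => Hcb'.
    by move: (ltn_trans Hcb' Hbc); rewrite ltnn.
Qed.

Lemma step2C R S S1 m S2 V Ot x : uniq (rcons (R ++ S) x) -> uniq (Ot ++ x :: V ++ rev R) ->
  sorted ltn R -> Inv2 R S S1 m S2 V Ot (V ++ rev R) -> m < x -> Pb (R ++ S) ->
  (Pb (rcons (R ++ S) x) -> Inv (rcons (R ++ S) x) Ot (x :: V ++ rev R)) /\
  (~~ Pb (rcons (R ++ S) x) -> ~~ A231 (Ot ++ x :: V ++ rev R)).
Proof.
move=> Hu Huo HR Hinv Hmx HP.
have Hu0 : uniq (R ++ S) by move: Hu; rewrite rcons_uniq => /andP [].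
have Hx : x \notin R ++ S by move: Hu; rewrite rcons_uniq => /andP [].
have [HlV HV0 HmS Hml [Hmem Hm HhW]] := Inv2_facts Hu0 Hinv.
have HW : sorted gtn (rev R) by rewrite rev_sorted.
case: Hinv => [HR0 HS Hh Hall [HO HV HsO HsV [HOV Hst]]].
have HS0 : S != [::] by rewrite HS; case: (S1).
have HuS : uniq S by move: Hu0; rewrite cat_uniq => /and3P [].
have HuS' := HuS; rewrite HS in HuS'.
have HmS2 : m \notin S2 by move: HuS'; rewrite cat_uniq => /and3P [_ _ /= /andP []].
have liftS : forall a b, bef S a b -> bef (R ++ S) a b by move=> a b; apply: bef_catr.
have liftT : forall a b, bef (R ++ S) a b -> bef (rcons (R ++ S) x) a b.
  by move=> a b; apply: bef_rcons_l.
have befS1m : forall a b, a \in S1 -> b \in m :: S2 -> bef S a b.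
  by move=> a b Ha Hb; rewrite HS; apply: bef_cat_lr.
have befmS2 : forall b, b \in S2 -> bef S m b.
  by move=> b Hb; rewrite HS; apply: bef_catr => //; apply: bef_head.
have HxS : forall z, z \in S -> z != x.
  by move=> z Hz; apply/negP => /eqP E; subst z; move: Hx; rewrite mem_cat Hz orbT.
have HxR : forall z, z \in R -> z != x.
  by move=> z Hz; apply/negP => /eqP E; subst z; move: Hx; rewrite mem_cat Hz.
have HmO : forall z, z \in Ot -> m < z by [].
have HmSle : forall z, z \in S -> m <= z by move=> z Hz; move/allP: Hall; apply.
have HuR : last 0 R \in R by apply: last_in.
have HfS : forall z, z \in S1 -> head 0 S \in S1.
  by move=> z; rewrite HS; case: (S1) => //= f S1' _; rewrite inE eqxx.
split.
- move=> HP'; case/andP: (HP') => /no132P H132 /no4P H4.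
  have F1 : forall v, v \in V -> v < x.
    move=> v Hv; have HvS : v \in S by rewrite Hmem Hv orbT.
    case: (ltngtP v x) => // Hxv; last by move: (HxS v HvS); rewrite Hxv eqxx.
    move: Hv; rewrite (perm_mem HV) inE => /orP [/eqP E | Hv2].
    + by subst v; move: (ltn_trans Hmx Hxv); rewrite ltnn.
    + have := H132 m v x (liftT _ _ (liftS _ _ (befmS2 _ Hv2))) (bef_rcons_x Hu _).
      by rewrite Hmx Hxv => /(_ _); apply; rewrite mem_cat HvS orbT.
  have F2 : forall o, o \in Ot -> x < o.
    move=> o Ho; have HoS1 : o \in S1 by rewrite -(perm_mem HO).
    have HoS : o \in S by rewrite Hmem Ho.
    case: (ltngtP o x) => // Hox; last by move: (HxS o HoS); rewrite Hox eqxx.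
    set f := head 0 S; set u := last 0 R.
    have HfS1 : f \in S1 := HfS o HoS1.
    have HfS' : f \in S by rewrite HS mem_cat HfS1.
    have HfO : f \in Ot by rewrite (perm_mem HO).
    have Hmf : m < f := HmO f HfO.
    have Huf : bef (R ++ S) u f by apply: bef_cat_lr.
    have Hfm : bef S f m by apply: befS1m; rewrite ?inE ?eqxx.
    have Hom : bef S o m by apply: befS1m; rewrite ?inE ?eqxx.
    have Hmxb : bef (rcons (R ++ S) x) m x by apply: (bef_rcons_x Hu); rewrite mem_cat HmS orbT.
    have [Eof | Nof] := eqVneq o f.
    + subst o; have := H4 u f m x (liftT _ _ Huf) (liftT _ _ (liftS _ _ Hfm)) Hmxb.
      by rewrite Hmf Hh Hox.
    + have Hfo : bef S f o.
        have [S1' ES1] : exists S1', S1 = f :: S1'.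
          by move: HfS1; rewrite /f HS; case: (S1) => //= f' S1' _; exists S1'.
        rewrite HS ES1; apply: bef_cat_l; apply: bef_head.
        * by move: HuS'; rewrite ES1 /= mem_cat negb_or => /andP [/andP []].
        * by move: HoS1; rewrite ES1 inE (negbTE Nof).
      case: (ltngtP o f) => Hof.
      * have := H4 f o m x (liftT _ _ (liftS _ _ Hfo)) (liftT _ _ (liftS _ _ Hom)) Hmxb.
        by rewrite (HmO o Ho) Hof Hox.
      * have := H4 u f m x (liftT _ _ Huf) (liftT _ _ (liftS _ _ Hfm)) Hmxb.
        by rewrite Hmf Hh (ltn_trans Hof Hox).
      * by rewrite Hof eqxx in Nof.
  exists R, (rcons S x); split; [by rewrite rcons_cat | done | right].
  exists S1, m, (rcons S2 x), (x :: V); split => //.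
  + by rewrite HS rcons_cat rcons_cons.
  + by case: (S) HS0 Hh.
  + by rewrite all_rcons (ltnW Hmx).
  split => //.
  + rewrite -rcons_cons perm_sym perm_rcons perm_cons perm_sym //.
  + rewrite /= path_sortedE; last exact: gtn_tr.
    by rewrite HsV andbT; apply/allP => v Hv; apply: F1.
  split => //.
  apply/allP => o Ho /=; rewrite F2 //=.
  by move/allP: HOV; apply.
- move=> HnP.
  case/andP: (HP) => /no132P H132 _.
  have Hux : uniq (x :: V ++ rev R) by move: Huo; rewrite cat_uniq => /and3P [].
  have HuVW : uniq (V ++ rev R) by move: Hux => /andP [].
  have HxVW : x \notin V ++ rev R by move: Hux => /andP [].
  have bo_Ox : forall o, o \in Ot -> bef (Ot ++ x :: V ++ rev R) o x.
    by move=> o Ho; apply: bef_cat_lr => //; rewrite inE eqxx.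
  have bo_xr : forall r, r \in V ++ rev R -> bef (Ot ++ x :: V ++ rev R) x r.
    by move=> r Hr; apply: bef_catr => //; apply: bef_head.
  have bo_VW : forall a b, bef (V ++ rev R) a b -> bef (Ot ++ x :: V ++ rev R) a b.
    by move=> a b H; apply: bef_catr => //; apply: (@bef_catr [:: x]).
  have HmV : m \in V by rewrite (perm_mem HV) inE eqxx.
  have HmVW : m \in V ++ rev R by rewrite mem_cat HmV.
  apply/negP => /A231P HA.
  case/orP: (viol_of Hu HP HnP).
  + case/hasP => y Hy /hasP [z Hz /and3P [Hyz Hyx Hxz]].
    have [Hi|Hi] := boolP (has (fun v => x < v) V).
      case/hasP: Hi => v Hv Hxv.
      have Hvm : bef V v m by rewrite (bef_sorted gtn_tr gtn_irr HsV Hv HmV) /= (ltn_trans Hmx Hxv).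
      have HvVW : v \in V ++ rev R by rewrite mem_cat Hv.
      have := HA x v m (bo_xr v HvVW) (bo_VW _ _ (bef_cat_l _ Hvm)).
      by rewrite Hmx Hxv.
    have [Hii|Hii] := boolP (has (fun o => o < x) Ot).
      case/hasP: Hii => o Ho Hox.
      have := HA o x m (bo_Ox o Ho) (bo_xr m HmVW).
      by rewrite (HmO o Ho) Hox.
    have [Hiii|Hiii] := boolP (has (fun r => has (fun r' => (r < x) && (x < r')) R) R).
      case/hasP: Hiii => r Hr /hasP [r' Hr' /andP [Hrx Hxr']].
      have Hrr : bef (rev R) r' r.
        by rewrite (bef_sorted gtn_tr gtn_irr HW) ?mem_rev //= (ltn_trans Hrx Hxr').
      have Hr'VW : r' \in V ++ rev R by rewrite mem_cat mem_rev Hr' orbT.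
      have := HA x r' r (bo_xr r' Hr'VW) (bo_VW _ _ (bef_catr HuVW Hrr)).
      by rewrite Hrx Hxr'.
    move/hasPn: Hi => Hi; move/hasPn: Hii => Hii.
    have Hiii' : forall r r', r \in R -> r' \in R -> ~~ ((r < x) && (x < r')).
      by move=> r r' Hr Hr'; move/hasPn: Hiii => /(_ r Hr) /hasPn /(_ r' Hr').
    move: Hz; rewrite mem_cat => /orP [HzR | HzS].
      have HyR := bef_in_left Hu0 Hyz HzR.
      case/andP: (bef_mem HyR) => HyR' _.
      by move: (Hiii' y z HyR' HzR); rewrite Hyx Hxz.
    move: (HzS); rewrite Hmem => /orP [HzO | HzV]; last by move: (Hi z HzV); rewrite Hxz.
    move: Hy; rewrite mem_cat => /orP [HyR | HyS].
    * set u := last 0 R.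
      case: (ltngtP x u) => Hxu.
      -- by move: (Hiii' y u HyR HuR); rewrite Hyx Hxu.
      -- have HzS1 : z \in S1 by rewrite -(perm_mem HO).
         have HfO : head 0 S \in Ot by rewrite (perm_mem HO); exact: HfS HzS1.
         by move: (Hii _ HfO); rewrite (ltn_trans Hh Hxu).
      -- by move: (HxR u HuR); rewrite -Hxu eqxx.
    * move: (HyS); rewrite Hmem => /orP [HyO | HyV]; first by move: (Hii y HyO); rewrite Hyx.
      have HzS1 : z \in S1 by rewrite -(perm_mem HO).
      have HyV' : y \in m :: S2 by rewrite -(perm_mem HV).
      have H1 := befS1m z y HzS1 HyV'.
      have H2 := bef_in_right Hu0 Hyz HyS.
      by case: (bef_asym H1 H2).
  + case/hasP => c Hc /hasP [b Hb /hasP [a Ha /and5P [Hcb Hba Hab Hbc Hbx]]].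
    have HbS : b \in S.
      move: Hb; rewrite mem_cat => /orP [HbR|//].
      have HcbR := bef_in_left Hu0 Hcb HbR.
      case/andP: (bef_mem HcbR) => HcR _.
      move: HcbR; rewrite (bef_sorted ltn_tr ltn_irr HR HcR HbR) /= => Hcb'.
      by move: (ltn_trans Hcb' Hbc); rewrite ltnn.
    have HbaS := bef_in_right Hu0 Hba HbS.
    have HaS : a \in S by case/andP: (bef_mem HbaS).
    have Hma : m <= a := HmSle a HaS.
    have Hmb : m < b := leq_ltn_trans Hma Hab.
    move: (HbS); rewrite Hmem => /orP [HbO | HbV].
    * have := HA b x m (bo_Ox b HbO) (bo_xr m HmVW).
      by rewrite Hmb Hbx.
    * move: HbV; rewrite (perm_mem HV) inE => /orP [/eqP Ebm | HbS2].
        by move: Hmb; rewrite Ebm ltnn.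
      have Hmb' := befmS2 b HbS2.
      have [Eam | Nam] := eqVneq a m.
        by subst a; case: (bef_asym HbaS Hmb').
      have Hma' : m < a by rewrite ltn_neqAle eq_sym Nam Hma.
      have := H132 m b a (liftS _ _ Hmb') (liftS _ _ HbaS).
      by rewrite Hma' Hab.
Qed.

Lemma finish tau Ot st : uniq tau -> uniq (Ot ++ st) ->
  (Pb tau -> Inv tau Ot st) -> (~~ Pb tau -> ~~ A231 (Ot ++ st)) ->
  A231 (Ot ++ st) = Pb tau /\ (Pb tau -> Inv tau Ot st).
Proof.
move=> Hu Huo HI HV; split => //.
case HPb: (Pb tau).
- exact: Inv_A231 (HI HPb).
- by apply/negbTE; apply: HV; rewrite HPb.
Qed.

Lemma main_inv tau : uniq tau -> let: (Ot, st) := run av123 tau [::] in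
  A231 (Ot ++ st) = Pb tau /\ (Pb tau -> Inv tau Ot st).
Proof.
elim/last_ind: tau => [|tau x IH] Hu.
- split => // _; exists [::], [::]; split => //; by left.
have Hu0 : uniq tau by move: Hu; rewrite rcons_uniq => /andP [].
have Hx : x \notin tau by move: Hu; rewrite rcons_uniq => /andP [].
have Hp := run_perm av123 tau [::]; rewrite cats0 in Hp.
move: (IH Hu0) Hp; rewrite run_rcons.
case: (run av123 tau [::]) => Ot st [HA HI] /= Hp.
have Huo : forall p s', st = p ++ s' -> uniq ((Ot ++ p) ++ x :: s').
  move=> p s' Est; rewrite (perm_uniq (_ : perm_eq _ (rcons tau x))) //.
  apply/permP => q; move/permP: Hp => /(_ q); rewrite Est -cats1 !count_cat /=; lia.
have [HP|HP] := boolP (Pb tau).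
- have [R [S [Htau HR Hc]]] := HI HP; subst tau.
  case: Hc => [[HS0 [HOt Hst]] | [S1 [m [S2 [V Hinv]]]]].
  + subst S Ot st; rewrite cats0 in Hu Hu0 Hx HP Huo *.
    rewrite pp_A; last by rewrite rev_sorted.
    have Huo' := Huo [::] (rev R) erefl.
    have [H1 H2] := step1 Hu HR HP.
    exact: (@finish _ [::] (x :: rev R)).
  + have Hinv' := Hinv; case: Hinv' => [HR0 HS Hh Hall [HO HV HsO HsV [HOV Hst]]].
    have [HlV HV0 HmS Hml [Hmem Hm HhW]] := Inv2_facts Hu0 Hinv.
    have HmT : m \in R ++ S by rewrite mem_cat HmS orbT.
    have HWs : sorted gtn (rev R) by rewrite rev_sorted.
    have HW0 : rev R != [::] by move: HR0; case/lastP: (R) => // R' u; rewrite rev_rcons.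
    subst st.
    case: (ltngtP x m) => Hxm.
    * rewrite pp_B //; last by rewrite HlV.
      2: by rewrite HlV HhW.
      have Huo' := Huo V (rev R) erefl.
      have [H1 H2] := step2B Hu Huo' HR Hinv Hxm HP.
      exact: (@finish _ (Ot ++ V) (x :: rev R)).
    * rewrite pp_C //; last by rewrite HlV.
      2: by move=> _; rewrite HlV HhW.
      have Huo' := Huo [::] (V ++ rev R) erefl; rewrite cats0 in Huo' *.
      have [H1 H2] := step2C Hu Huo' HR Hinv Hxm HP.
      exact: (@finish _ Ot (x :: V ++ rev R)).
    * by subst x; rewrite HmT in Hx.
- have Hn : Pb (rcons tau x) = false by rewrite Pb_rcons // (negbTE HP).
  rewrite Hn; case: (push_pop_split av123 x st) => p [s' [-> Est]].
  split => //; apply/negbTE/negP => H.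
  have := A231_insert (Huo p s' Est) H.
  by rewrite -catA -Est HA (negbTE HP).
Qed.

Lemma SC_char tau : uniq tau -> A231 (SC_1_23 tau) = Pb tau.
Proof.
move=> Hu; change (SC_1_23 tau) with (SC av123 tau); rewrite /SC SC_aux_run.
by have := main_inv Hu; case: (run av123 tau [::]) => Ot st [].
Qed.

Lemma Sort_n_char n tau : Sort_n SC_1_23 n tau = is_perm n tau && Pb tau.
Proof.
rewrite /Sort_n; have [Hp|] := boolP (is_perm n tau); rewrite //=.
have Hu : uniq tau by rewrite (perm_uniq Hp) iota_uniq.
have Hp1 : perm_eq (SC_1_23 tau) tau := SC_perm _ _.
have Hu1 : uniq (SC_1_23 tau) by rewrite (perm_uniq Hp1).
have Hp2 : perm_eq (west_s (SC_1_23 tau)) (iota 1 n).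
  apply: perm_trans (SC_perm _ _) _; apply: perm_trans Hp1 Hp.
rewrite -SC_char // -west_sorted //.
apply/eqP/idP => [-> | Hs]; first exact: iota_ltn_sorted.
apply: (@irr_sorted_eq _ ltn ltn_trans ltnn) => //; first exact: iota_ltn_sorted.
exact: perm_mem Hp2.
Qed.

Lemma occ_map pi tau idx : uniq pi -> uniq tau -> sorted ltn idx ->
  all (fun i => i < size pi) idx -> occ_at pi tau [::] idx ->
  exists g : nat -> nat, (forall a b, bef tau a b -> bef pi (g a) (g b)) /\
     (forall a b, a \in tau -> b \in tau -> (g a < g b) = (a < b)).
Proof.
move=> Hupi Hutau Hs Hall /and3P [/eqP Hsz Hrel _].
exists (fun a => nth 0 pi (nth 0 idx (index a tau))); split.
- move=> a b /and3P [Ha Hb Hab].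
  have Hia : index a tau < size idx by rewrite Hsz index_mem.
  have Hib : index b tau < size idx by rewrite Hsz index_mem.
  have Hka : nth 0 idx (index a tau) < size pi by move/allP: Hall; apply; rewrite mem_nth.
  have Hkb : nth 0 idx (index b tau) < size pi by move/allP: Hall; apply; rewrite mem_nth.
  rewrite /bef !mem_nth //= !index_uniq //.
  exact: (sorted_ltn_nth ltn_trans 0 Hs).
- move=> a b Ha Hb.
  have Hia : index a tau \in iota 0 (size tau) by rewrite mem_iota add0n index_mem.
  have Hib : index b tau \in iota 0 (size tau) by rewrite mem_iota add0n index_mem.
  move/allP: Hrel => /(_ _ Hia) /allP /(_ _ Hib) /eqP ->.
  by rewrite !nth_index.
Qed.

Lemma Pb_transfer pi tau : uniq pi -> uniq tau -> contains pi tau -> Pb pi -> Pb tau.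
Proof.
move=> Hupi Hutau /vcontainsP [idx [Hs Hall Hocc]] /andP [/no132P H1 /no4P H2].
have [g [Hg1 Hg2]] := occ_map Hupi Hutau Hs Hall Hocc.
have Hm : forall a b, bef tau a b -> (a \in tau) && (b \in tau) by move=> a b /bef_mem.
apply/andP; split.
- apply/no132P => a b c Hab Hbc.
  case/andP: (Hm _ _ Hab) => Ha Hb; case/andP: (Hm _ _ Hbc) => _ Hc.
  by have := H1 _ _ _ (Hg1 _ _ Hab) (Hg1 _ _ Hbc); rewrite !Hg2.
- apply/no4P => c b a d Hcb Hba Had.
  case/andP: (Hm _ _ Hcb) => Hc Hb; case/andP: (Hm _ _ Had) => Ha Hd.
  by have := H2 _ _ _ _ (Hg1 _ _ Hcb) (Hg1 _ _ Hba) (Hg1 _ _ Had); rewrite !Hg2.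
Qed.

Theorem mainTheorem14 : perm_class (SortSet SC_1_23).
Proof.
split.
- by move=> pi [n Hn HS]; exists n => //; case/andP: HS.
- move=> pi tau [n Hn HS] [m Hm Ht] Hc; exists m => //.
  move: HS; rewrite !Sort_n_char Ht => /andP [Hpi HP] /=.
  apply: (Pb_transfer _ _ Hc HP).
  + by rewrite (perm_uniq Hpi) iota_uniq.
  + by rewrite (perm_uniq Ht) iota_uniq.
Qed.
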